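(* Let $R=S/J$ be a complete intersection SAGA of codimension $n+1$ presented by quadrics, and suppose $w,z\in R^1\setminus\{0\}$ satisfy $zw=0$. Then $(z)=(0:w)$ as ideals of $R$, and $\bar R=R/(z)$ is a complete intersection SAGA of codimension $n$ presented by quadrics. In particular, $\dim K^s_w=\dim R^{s-1}-\dim K^{s-1}_z$ for all $s\ge1$.
   Context: $\mathbb K$ is an algebraically closed field of characteristic $0$. A complete intersection SAGA of codimension $n+1$ presented by quadrics is $R=S/J$, $S=\mathbb K[x_0,\dots,x_n]$, $J$ generated by a regular sequence of $n+1$ homogeneous quadrics (socle degree $n+1$). For $q\in R^s$, $K^a_q=\ker(q\cdot:R^a\to R^{a+s})$, with $K^0_q=\ker(q\cdot:R^0\to R^s)$. $(0:w)=\{r\in R\mid rw=0\}$. *)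

(* Defs.v *)
From HB Require Import structures.
From mathcomp Require Import all_boot all_order all_algebra.
From mathcomp Require Import mpoly.
Set Implicit Arguments. Unset Strict Implicit. Unset Printing Implicit Defensive.
Import GRing.Theory.
Local Open Scope ring_scope.

Section CIDefs.
Variable K : fieldType.

Definition mem_ideal (m : nat) (gens : seq {mpoly K[m]}) (p : {mpoly K[m]}) : Prop :=
  exists c : seq {mpoly K[m]}, p = \sum_(i < size gens) c`_i * gens`_i.

Definition regular_seq (m : nat) (gens : seq {mpoly K[m]}) : Prop :=
  ~ mem_ideal gens 1 /\
  forall i, (i < size gens)%N -> forall g : {mpoly K[m]},
    mem_ideal (take i gens) (g * gens`_i) -> mem_ideal (take i gens) g.

(* S/(qs), S = K[x_0..x_{m-1}], is a complete intersection SAGA of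
   codimension m presented by quadrics: qs is a regular sequence of m
   homogeneous quadrics in the m variables. *)
Definition CI_quadric_SAGA (m : nat) (qs : seq {mpoly K[m]}) : Prop :=
  size qs = m /\ (forall q, q \in qs -> q \is 2.-homog) /\ regular_seq qs.

Definition indep_mod (m : nat) (qs : seq {mpoly K[m]}) (gs : seq {mpoly K[m]}) : Prop :=
  forall c : seq K, mem_ideal qs (\sum_(i < size gs) c`_i *: gs`_i) ->
    forall i, (i < size gs)%N -> c`_i = 0.

(* the image in S/(qs) of the subspace {g | P g} of S has K-dimension d *)
Definition dim_mod (m : nat) (qs : seq {mpoly K[m]}) (P : {mpoly K[m]} -> Prop) (d : nat) : Prop :=
  (exists gs : seq {mpoly K[m]}, size gs = d /\ (forall g, g \in gs -> P g) /\ indep_mod qs gs) /\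
  (forall gs : seq {mpoly K[m]}, (forall g, g \in gs -> P g) -> indep_mod qs gs -> (size gs <= d)%N).

Definition dimR (m : nat) (qs : seq {mpoly K[m]}) (e d : nat) : Prop :=
  dim_mod qs (fun g => g \is e.-homog) d.

(* dim K^a_q = d, where K^a_q = ker (q . : R^a -> R^(a+s)), q a representative in S *)
Definition dimK (m : nat) (qs : seq {mpoly K[m]}) (e : nat) (q : {mpoly K[m]}) (d : nat) : Prop :=
  dim_mod qs (fun g => g \is e.-homog /\ mem_ideal qs (g * q)) d.

End CIDefs.

(* Main.v *)
Require Import Defs.
From HB Require Import structures.
From mathcomp Require Import all_boot all_order all_algebra.
From mathcomp Require Import mpoly.
From mathcomp Require Import zify.
From Stdlib Require Import Classical ClassicalEpsilon.
Set Implicit Arguments. Unset Strict Implicit. Unset Printing Implicit Defensive.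
Import GRing.Theory.
Local Open Scope ring_scope.

Section Ideal.
Variables (K : fieldType) (m : nat).
Implicit Types (gs hs : seq {mpoly K[m]}) (p q a b g : {mpoly K[m]}).

Lemma mem_idealP gs p : mem_ideal gs p <->
  exists f : nat -> {mpoly K[m]}, p = \sum_(i < size gs) f i * gs`_i.
Proof.
split=> [[c ->]|[f ->]]; first by exists (fun i => c`_i).
exists (mkseq f (size gs)); apply: eq_bigr => i _; by rewrite nth_mkseq.
Qed.

Lemma mem_ideal0 gs : mem_ideal gs 0.
Proof. apply/mem_idealP; exists (fun _ => 0); by rewrite big1 // => i _; rewrite mul0r. Qed.

Lemma mem_idealD gs p q : mem_ideal gs p -> mem_ideal gs q -> mem_ideal gs (p + q).
Proof.
move=> /mem_idealP[f ->] /mem_idealP[h ->]; apply/mem_idealP.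
exists (fun i => f i + h i); rewrite -big_split; apply: eq_bigr => i _; by rewrite mulrDl.
Qed.

Lemma mem_idealMl gs a p : mem_ideal gs p -> mem_ideal gs (a * p).
Proof.
move=> /mem_idealP[f ->]; apply/mem_idealP.
exists (fun i => a * f i); rewrite mulr_sumr; apply: eq_bigr => i _; by rewrite mulrA.
Qed.

Lemma mem_idealMr gs a p : mem_ideal gs p -> mem_ideal gs (p * a).
Proof. by rewrite mulrC; apply: mem_idealMl. Qed.

Lemma mem_idealN gs p : mem_ideal gs p -> mem_ideal gs (- p).
Proof. by move=> h; rewrite -mulN1r; apply: mem_idealMl. Qed.

Lemma mem_idealB gs p q : mem_ideal gs p -> mem_ideal gs q -> mem_ideal gs (p - q).
Proof. by move=> hp hq; apply: mem_idealD => //; apply: mem_idealN. Qed.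

Lemma mem_idealZ gs c p : mem_ideal gs p -> mem_ideal gs (c *: p).
Proof. by move=> h; rewrite -mul_mpolyC; apply: mem_idealMl. Qed.

Lemma mem_ideal_sum gs (I : Type) (r : seq I) (P : pred I) (F : I -> {mpoly K[m]}) :
  (forall i, P i -> mem_ideal gs (F i)) -> mem_ideal gs (\sum_(i <- r | P i) F i).
Proof.
move=> h; elim/big_rec: _ => [|i x Pi hx]; first exact: mem_ideal0.
by apply: mem_idealD => //; apply: h.
Qed.

Lemma mem_ideal_gen gs g : g \in gs -> mem_ideal gs g.
Proof.
move=> gin; apply/mem_idealP; exists (fun i => ((i == index g gs) : bool)%:R).
have hi : (index g gs < size gs)%N by rewrite index_mem.
rewrite (bigD1 (Ordinal hi)) //= eqxx mul1r nth_index // big1 ?addr0 // => j hj.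
have -> : (j == index g gs :> nat) = false.
  by apply/negbTE; move: hj; apply: contra => /eqP e; apply/eqP/val_inj.
by rewrite mul0r.
Qed.

Lemma ideal_sub gs hs p : (forall g, g \in gs -> mem_ideal hs g) ->
  mem_ideal gs p -> mem_ideal hs p.
Proof.
move=> h /mem_idealP[f ->]; apply: mem_ideal_sum => i _; apply: mem_idealMl.
by apply: h; apply: mem_nth.
Qed.

Lemma ideal_perm gs hs p : perm_eq gs hs -> mem_ideal gs p -> mem_ideal hs p.
Proof. move=> e; apply: ideal_sub => g gin; apply: mem_ideal_gen; by rewrite -(perm_mem e). Qed.

Lemma mem_ideal_cons a gs p : mem_ideal (a :: gs) p <-> exists t, mem_ideal gs (p - t * a).
Proof.
split=> [/mem_idealP[f ->]|[t /mem_idealP[f hf]]].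
  exists (f 0%N); rewrite big_ord_recl /= addrAC subrr add0r; apply/mem_idealP.
  exists (fun i => f i.+1); apply: eq_bigr => i _; by [].
apply/mem_idealP; exists (fun i => if i is i'.+1 then f i' else t).
rewrite big_ord_recl /=; rewrite -hf; rewrite addrC subrK //.
Qed.

Lemma mem_ideal_rcons a gs p : mem_ideal (rcons gs a) p <-> exists t, mem_ideal gs (p - t * a).
Proof.
split=> [h|h].
  by apply/mem_ideal_cons; apply: ideal_perm h; rewrite perm_rcons.
by move/mem_ideal_cons: h; apply: ideal_perm; rewrite perm_sym perm_rcons.
Qed.

Lemma mem_ideal_sub_cons a gs p : mem_ideal gs p -> mem_ideal (a :: gs) p.
Proof. apply: ideal_sub => g gin; apply: mem_ideal_gen; by rewrite inE gin orbT. Qed.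

Lemma mem_ideal_sub_rcons a gs p : mem_ideal gs p -> mem_ideal (rcons gs a) p.
Proof. apply: ideal_sub => g gin; apply: mem_ideal_gen; by rewrite mem_rcons inE gin orbT. Qed.

Definition eqI gs hs := forall p, mem_ideal gs p <-> mem_ideal hs p.

Definition nzd gs a := forall g, mem_ideal gs (g * a) -> mem_ideal gs g.

Lemma nzd_eqI gs hs a : eqI gs hs -> nzd gs a -> nzd hs a.
Proof. by move=> e h g /e /h /e. Qed.

Lemma eqI_rcons gs hs a : eqI gs hs -> eqI (rcons gs a) (rcons hs a).
Proof.
move=> e p; rewrite !mem_ideal_rcons; split=> [[t /e h]|[t /e h]]; by exists t.
Qed.

Fixpoint regA gs s : Prop :=
  match s with [::] => True | a :: s' => nzd gs a /\ regA (rcons gs a) s' end.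

Lemma regA_eqI gs hs s : eqI gs hs -> regA gs s -> regA hs s.
Proof.
elim: s gs hs => //= a s ih gs hs e [h1 h2]; split; first exact: nzd_eqI h1.
by apply: ih h2; apply: eqI_rcons.
Qed.

Lemma regA_cat gs s t : regA gs (s ++ t) <-> regA gs s /\ regA (gs ++ s) t.
Proof.
elim: s gs => [|a s ih] gs /=; first by rewrite cats0; tauto.
rewrite ih -cats1 -catA /=; tauto.
Qed.

Lemma regAE gs s : regA gs s <-> forall i, (i < size s)%N -> nzd (gs ++ take i s) s`_i.
Proof.
elim: s gs => [|a s ih] gs /=; first by split => // _ [].
rewrite ih; split.
  move=> [h1 h2] [|i] /=; first by rewrite cats0.
  move=> hi; move: (h2 i hi); by rewrite -cats1 -catA.
move=> h; split; first by move: (h 0%N isT); rewrite cats0.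
move=> i hi; move: (h i.+1 hi); by rewrite /= -cats1 -catA.
Qed.

Lemma regular_regA gs : regular_seq gs <-> ~ mem_ideal gs 1 /\ regA [::] gs.
Proof. rewrite regAE; split=> [][h1 h2]; split => // i hi; exact: (h2 i hi). Qed.

End Ideal.

Notation pih d p := (pihomog mdeg d p).

Section Homog.
Variables (K : fieldType) (m : nat).
Implicit Types (gs hs : seq {mpoly K[m]}) (p q a b g : {mpoly K[m]}).


Lemma pih_homog k d p : p \is k.-homog -> pih d p = if k == d then p else 0.
Proof.
move=> hp; case: eqP => [<-|ne]; first exact: pihomog_dE.
by apply: pihomog_ne0 hp; apply/eqP.
Qed.

Lemma pihM e d p q : q \is e.-homog ->
  pih d (p * q) = if (e <= d)%N then pih (d - e) p * q else 0.
Proof.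
move=> hq; rewrite {1}[p]mpolyE mulr_suml linear_sum /=.
have -> : (if (e <= d)%N then pihomog mdeg (d - e) p * q else 0) =
   \sum_(mo <- msupp p) (if (e <= d)%N then pihomog mdeg (d - e) (p@_mo *: 'X_[mo]) * q else 0).
  case: ifP => _; last by rewrite big1.
  by rewrite {1}[p]mpolyE linear_sum /= mulr_suml.
apply: eq_bigr => mo _.
have hX : 'X_[mo] * q \is (mdeg mo + e).-homog by apply: dhomogM => //; rewrite dhomogX.
rewrite -scalerAl !linearZ /= (pih_homog _ hX) -scalerAl.
have hX' : ('X_[mo] : {mpoly K[m]}) \is (mdeg mo).-homog by rewrite dhomogX.
case: (leqP e d) => hed.
  rewrite (pih_homog _ hX').
  have -> : (mdeg mo + e == d) = (mdeg mo == d - e)%N.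
    by apply/eqP/eqP => ?; lia.
  by case: ifP => _; rewrite ?mul0r ?scaler0.
have -> : (mdeg mo + e == d) = false.
  by apply/negbTE/eqP; lia.
by rewrite scaler0.
Qed.

Definition HGe gs := forall g, g \in gs -> exists e, g \is e.-homog.
Definition hpos g := exists2 e, (0 < e)%N & g \is e.-homog.
Definition HG gs := forall g, g \in gs -> hpos g.

Lemma HG_HGe gs : HG gs -> HGe gs.
Proof. by move=> h g /h [e _ he]; exists e. Qed.

Lemma mem_ideal_pih gs d p : HGe gs -> mem_ideal gs p -> mem_ideal gs (pih d p).
Proof.
move=> hg /mem_idealP[f ->]; rewrite linear_sum /=; apply: mem_ideal_sum => i _.
have [e he] := hg _ (mem_nth 0 (ltn_ord i)).
rewrite (pihM _ _ he); case: ifP => _; last exact: mem_ideal0.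
by apply: mem_idealMl; apply: mem_ideal_gen; apply: mem_nth.
Qed.

Lemma no_unit gs : HG gs -> ~ mem_ideal gs 1.
Proof.
move=> hg /mem_idealP[f hf].
have : pih 0 (1 : {mpoly K[m]}) = 0.
  rewrite hf linear_sum /= big1 // => i _.
  have [e e0 he] := hg _ (mem_nth 0 (ltn_ord i)).
  by rewrite (pihM _ _ he) leqn0 (negbTE (lt0n_neq0 e0)).
by rewrite (pih_homog _ (dhomog1 _ _)) eqxx => /eqP; rewrite oner_eq0.
Qed.

Lemma pih_sum p : exists k, p = \sum_(d < k) pih d p.
Proof. by exists (mmeasure mdeg p); apply: pihomog_partitionE. Qed.

Lemma mem_ideal_comps gs p : (forall d, mem_ideal gs (pih d p)) -> mem_ideal gs p.
Proof.
move=> h; have [k ->] := pih_sum p; by apply: mem_ideal_sum => i _.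
Qed.

Lemma nzd_graded gs a b : HG gs -> hpos a -> hpos b ->
  nzd gs a -> nzd (rcons gs a) b -> nzd gs b.
Proof.
move=> hg [ea ea0 ha] [eb eb0 hb] nza nzb.
have hg' : HGe gs by apply: HG_HGe.
have hom : forall d p, p \is d.-homog -> mem_ideal gs (p * b) -> mem_ideal gs p.
  elim/ltn_ind => d ih p hp hpb.
  have /nzb : mem_ideal (rcons gs a) (p * b) by apply: mem_ideal_sub_rcons.
  move/mem_ideal_rcons => [t ht].
  have hpi := mem_ideal_pih d hg' ht.
  rewrite linearB /= (pih_homog _ hp) eqxx in hpi.
  rewrite (pihM _ _ ha) in hpi; case: (leqP ea d) => hed; rewrite ?hed in hpi; last first.
    by rewrite ifN ?subr0 // in hpi; rewrite -ltnNge.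
  set t1 := pih (d - ea) t in hpi.
  have ht1 : t1 \is (d - ea)%N.-homog by apply: pihomogP.
  have : mem_ideal gs ((t1 * b) * a).
    have -> : t1 * b * a = p * b - (p - t1 * a) * b by rewrite mulrBl opprB addrC subrK mulrAC.
    by apply: mem_idealB => //; apply: mem_idealMr.
  move/nza => /(ih (d - ea)%N _ _ ht1) h1.
  have -> : p = (p - t1 * a) + t1 * a by rewrite subrK.
  apply: mem_idealD => //; apply: mem_idealMr; apply: h1.
  by rewrite ltn_subrL ea0 (leq_trans ea0 hed).
move=> p hpb; apply: mem_ideal_comps => d; apply: (hom d); first exact: pihomogP.
have := mem_ideal_pih (d + eb) hg' hpb.
by rewrite (pihM _ _ hb) leq_addl addnK.
Qed.

Lemma nzd_swap gs a b : nzd gs a -> nzd (rcons gs a) b -> nzd gs b -> nzd (rcons gs b) a.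
Proof.
move=> nza nzb nzb' g /mem_ideal_rcons [t ht].
have : mem_ideal (rcons gs a) (t * b).
  apply/mem_ideal_rcons; exists g; rewrite -opprB; exact: mem_idealN.
move/nzb/mem_ideal_rcons => [t' ht'].
have : mem_ideal gs ((g - t' * b) * a).
  have -> : (g - t' * b) * a = (g * a - t * b) + (t - t' * a) * b.
    by rewrite mulrBl mulrBl mulrAC addrA subrK.
  by apply: mem_idealD => //; apply: mem_idealMr.
move/nza => h; apply/mem_ideal_rcons; exists t'; exact: h.
Qed.

End Homog.

Section Perm.
Variables (K : fieldType) (m : nat).
Implicit Types (gs hs s : seq {mpoly K[m]}) (p q a b g x y : {mpoly K[m]}).

Lemma HG_rcons gs a : HG gs -> hpos a -> HG (rcons gs a).
Proof. by move=> h ha g; rewrite mem_rcons inE => /orP[/eqP ->|/h]. Qed.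

Lemma HG_cons gs a : HG (a :: gs) <-> hpos a /\ HG gs.
Proof.
split=> [h|[ha h] g]; last by rewrite inE => /orP[/eqP ->|/h].
by split=> [|g gin]; apply: h; rewrite inE ?eqxx ?gin ?orbT.
Qed.

Lemma HG_cat gs hs : HG (gs ++ hs) <-> HG gs /\ HG hs.
Proof.
split=> [h|[h1 h2] g]; last by rewrite mem_cat => /orP[/h1|/h2].
by split=> g gin; apply: h; rewrite mem_cat gin ?orbT.
Qed.

Lemma eqI_perm gs hs : perm_eq gs hs -> eqI gs hs.
Proof. by move=> e p; split; apply: ideal_perm; rewrite // perm_sym. Qed.

Lemma regA_swap gs a b s : HG gs -> hpos a -> hpos b ->
  regA gs (a :: b :: s) -> regA gs (b :: a :: s).
Proof.
move=> hg ha hb /= [nza [nzb hr]].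
have nzb' := nzd_graded hg ha hb nza nzb.
split=> //; split; first exact: nzd_swap.
apply: regA_eqI hr; apply: eqI_perm.
by rewrite -!cats1 -!catA perm_cat2l /= (perm_catC [:: a] [:: b]).
Qed.

Lemma regA_to_end gs x s : HG gs -> hpos x -> HG s ->
  regA gs (x :: s) -> regA gs (s ++ [:: x]).
Proof.
elim: s gs => [|y s ih] gs hg hx hs //= h.
have [hy hs'] := (HG_cons _ _).1 hs.
have /= [nzy hr] := regA_swap hg hx hy h.
split=> //; apply: ih => //; exact: HG_rcons.
Qed.

Lemma regA_to_front gs x s : HG gs -> hpos x -> HG s ->
  regA gs (s ++ [:: x]) -> regA gs (x :: s).
Proof.
elim: s gs => [|y s ih] gs hg hx hs //= [nzy hr].
have [hy hs'] := (HG_cons _ _).1 hs.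
apply: regA_swap => //=; split=> //; apply: ih => //; exact: HG_rcons.
Qed.

End Perm.

Section Comp.
Variables (K : fieldType) (m k : nat).

Lemma congM (I : seq {mpoly K[k]}) u1 u2 v1 v2 : mem_ideal I (u1 - v1) -> mem_ideal I (u2 - v2) ->
  mem_ideal I (u1 * u2 - v1 * v2).
Proof.
move=> h1 h2; have -> : u1 * u2 - v1 * v2 = (u1 - v1) * u2 + v1 * (u2 - v2).
  by rewrite mulrBl mulrBr addrA subrK.
by apply: mem_idealD; [apply: mem_idealMr | apply: mem_idealMl].
Qed.

Lemma congX (I : seq {mpoly K[k]}) u v e : mem_ideal I (u - v) -> mem_ideal I (u ^+ e - v ^+ e).
Proof.
move=> h; elim: e => [|e ih]; first by rewrite !expr0 subrr; apply: mem_ideal0.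
by rewrite !exprS; apply: congM.
Qed.

Lemma cong_comp (I : seq {mpoly K[k]}) (T1 T2 : m.-tuple {mpoly K[k]}) (p : {mpoly K[m]}) :
  (forall i, mem_ideal I (tnth T1 i - tnth T2 i)) -> mem_ideal I ((p \mPo T1) - (p \mPo T2)).
Proof.
move=> h; rewrite !comp_mpolyE -sumrB; apply: mem_ideal_sum => mo _.
rewrite -scalerBr; apply: mem_idealZ.
apply: (big_ind2 (fun u v => mem_ideal I (u - v))) => //.
- by rewrite subrr; apply: mem_ideal0.
- by move=> *; apply: congM.
- by move=> i _; apply: congX.
Qed.

Lemma mem_ideal_comp (gs : seq {mpoly K[m]}) (T : m.-tuple {mpoly K[k]}) p :
  mem_ideal gs p -> mem_ideal (map (comp_mpoly T) gs) (p \mPo T).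
Proof.
move=> /mem_idealP[f ->]; rewrite raddf_sum /=; apply: mem_ideal_sum => i _.
rewrite rmorphM /=; apply: mem_idealMl; apply: mem_ideal_gen.
by apply: map_f; apply: mem_nth.
Qed.

Lemma homog_comp (T : m.-tuple {mpoly K[k]}) (p : {mpoly K[m]}) d :
  (forall i, tnth T i \is 1.-homog) -> p \is d.-homog -> p \mPo T \is d.-homog.
Proof.
move=> hT hp; rewrite comp_mpolyE big_seq; apply: rpred_sum => mo hmo.
apply: rpredZ; have -> : d = mdeg mo by rewrite -(dhomog_mf hp hmo).
rewrite mdegE.
elim/big_ind2: _ => //; first exact: dhomog1.
  by move=> x1 x2 y1 y2 h1 h2; apply: dhomogM.
by move=> i _; have := dhomogMn (mo i) (hT i); rewrite mul1n.
Qed.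

End Comp.

Lemma comp_sum (K : fieldType) (m k l : nat) (T : m.-tuple {mpoly K[k]}) (F : 'I_l -> {mpoly K[m]}) :
  (\sum_(i < l) F i) \mPo T = \sum_(i < l) (F i \mPo T).
Proof. by rewrite raddf_sum. Qed.

Section Comp2.
Variables (K : fieldType) (m k l : nat).

Lemma comp_assoc (p : {mpoly K[m]}) (T : m.-tuple {mpoly K[k]}) (U : k.-tuple {mpoly K[l]}) :
  (p \mPo T) \mPo U = p \mPo [tuple (tnth T i \mPo U) | i < m].
Proof.
rewrite (comp_mpolyE p T) (comp_mpolyE p) raddf_sum /=; apply: eq_bigr => mo _.
rewrite linearZ /= rmorph_prod /=; congr (_ *: _); apply: eq_bigr => i _.
by rewrite rmorphXn /= tnth_map tnth_ord_tuple.
Qed.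

End Comp2.

Section LinAlg.
Variables (K : fieldType) (m : nat).
Implicit Types (gs hs vs J : seq {mpoly K[m]}) (p q g : {mpoly K[m]}).

Definition lincomb (c : seq K) gs := \sum_(i < size gs) c`_i *: gs`_i.

Lemma indepP J gs : indep_mod J gs <->
  forall c, mem_ideal J (lincomb c gs) -> forall i, (i < size gs)%N -> c`_i = 0.
Proof. by []. Qed.

Lemma LA J vs N (u : 'I_N -> {mpoly K[m]}) (beta : nat -> 'I_N -> K) :
  (forall i, (i < size vs)%N -> mem_ideal J (vs`_i - \sum_(t < N) beta i t *: u t)) ->
  (N < size vs)%N -> ~ indep_mod J vs.
Proof.
move=> hb hN hind.
set M := size vs in hb hN hind.
pose B : 'M[K]_(M, N) := \matrix_(i, j) beta i j.
have : kermx B != 0.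
  rewrite -mxrank_eq0 mxrank_ker subn_eq0 -ltnNge.
  exact: leq_ltn_trans (rank_leq_col B) hN.
move/rowV0Pn => [v /sub_kermxP hv vn0].
pose c := [seq v 0 i | i <- enum 'I_M].
have hc : forall i : 'I_M, c`_i = v 0 i.
  by move=> i; rewrite (nth_map i) ?size_enum_ord // nth_ord_enum.
have : mem_ideal J (lincomb c vs).
  have -> : lincomb c vs = \sum_(i < M) c`_i *: (vs`_i - \sum_(t < N) beta i t *: u t)
      + \sum_(t < N) (v *m B) 0 t *: u t.
    have -> : \sum_(t < N) (v *m B) 0 t *: u t = \sum_(i < M) c`_i *: \sum_(t < N) beta i t *: u t.
      rewrite (eq_bigr (fun t : 'I_N => \sum_(i < M) (c`_i * beta i t) *: u t)); last first.
        by move=> t _; rewrite !mxE scaler_suml; apply: eq_bigr => i _; rewrite mxE hc.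
      rewrite exchange_big /=; apply: eq_bigr => i _; rewrite scaler_sumr.
      by apply: eq_bigr => t _; rewrite scalerA.
    rewrite -big_split /=; apply: eq_bigr => i _; by rewrite -scalerDr subrK.
  rewrite hv [X in _ + X]big1 ?addr0; last by move=> t _; rewrite mxE scale0r.
  apply: mem_ideal_sum => i _; apply: mem_idealZ; exact: hb.
move/hind => h; apply/negP: vn0; rewrite negbK; apply/eqP/rowP => i.
by rewrite mxE -hc; apply: h.
Qed.

End LinAlg.

Lemma choose_fun (A : Type) (x0 : A) (Q : nat -> A -> Prop) :
  exists f : nat -> A, forall i, (exists a, Q i a) -> Q i (f i).
Proof.
exists (fun i => epsilon (inhabits x0) (Q i)) => i h; exact: epsilon_spec.
Qed.

Lemma max_exists (Q : nat -> Prop) N : Q 0%N -> (forall k, Q k -> (k <= N)%N) ->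
  exists d, Q d /\ forall k, Q k -> (k <= d)%N.
Proof.
elim: N => [|N ih] q0 hb; first by exists 0%N; split=> // k /hb.
case: (classic (Q N.+1)) => hN; first by exists N.+1.
apply: ih => // k hk; have := hb k hk; rewrite leq_eqVlt ltnS => /orP[/eqP e|//].
by move: hk; rewrite e.
Qed.

Section LinAlg2.
Variables (K : fieldType) (m : nat).
Implicit Types (gs hs vs J A C X : seq {mpoly K[m]}) (p q g b : {mpoly K[m]}).

Lemma indep_nil J : indep_mod J ([::] : seq {mpoly K[m]}).
Proof. by move=> c _ []. Qed.

Lemma dim_exists J (P : {mpoly K[m]} -> Prop) N (u : 'I_N -> {mpoly K[m]}) :
  (forall g, P g -> exists beta : 'I_N -> K, g = \sum_(t < N) beta t *: u t) ->
  exists d, dim_mod J P d.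
Proof.
move=> hsp.
have bound : forall gs, (forall g, g \in gs -> P g) -> indep_mod J gs -> (size gs <= N)%N.
  move=> gs hP hi; rewrite leqNgt; apply/negP => hN.
  have [f hf] := choose_fun (fun _ => 0 : K) (fun i beta => gs`_i = \sum_(t < N) beta t *: u t).
  apply: (LA (u := u) (beta := f)) hN hi => i hi'.
  rewrite -hf; first by rewrite subrr; apply: mem_ideal0.
  by apply: hsp; apply: hP; apply: mem_nth.
have [d [[gs [hs [hP hi]]] hmax]] : exists d, (exists gs,
   size gs = d /\ (forall g, g \in gs -> P g) /\ indep_mod J gs) /\ forall k, (exists gs,
   size gs = k /\ (forall g, g \in gs -> P g) /\ indep_mod J gs) -> (k <= d)%N.
  apply: (max_exists (N := N)).
    by exists [::]; split=> //; split=> //; apply: indep_nil.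
  by move=> k [gs [<- [hP hi]]]; apply: bound.
exists d; split; first by exists gs.
by move=> gs' hP' hi'; apply: hmax; exists gs'.
Qed.

Lemma lincomb_rcons (c : seq K) X b :
  lincomb c (rcons X b) = lincomb c X + c`_(size X) *: b.
Proof.
rewrite /lincomb size_rcons big_ord_recr /= nth_rcons ltnn eqxx; congr (_ + _).
by apply: eq_bigr => i _; rewrite nth_rcons ltn_ord.
Qed.

Lemma dependence J X b : indep_mod J X -> ~ indep_mod J (rcons X b) ->
  exists beta : 'I_(size X) -> K, mem_ideal J (b - \sum_(t < size X) beta t *: X`_t).
Proof.
move=> hX hXb; apply: NNPP => hno; apply: hXb => c hc; change (mem_ideal J (lincomb c (rcons X b))) in hc.
have hl : c`_(size X) = 0.
  apply: NNPP => /eqP hg; apply: hno.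
  exists (fun t => - (c`_t / c`_(size X))).
  have -> : b - \sum_(t < size X) - (c`_t / c`_(size X)) *: X`_t =
      (c`_(size X))^-1 *: lincomb c (rcons X b).
    rewrite lincomb_rcons scalerDr scalerA mulVf // scale1r addrC.
    rewrite /lincomb scaler_sumr -sumrN; congr (_ + _); apply: eq_bigr => i _.
    by rewrite scaleNr opprK scalerA mulrC.
  exact: mem_idealZ.
rewrite lincomb_rcons hl scale0r addr0 in hc.
move=> i; rewrite size_rcons ltnS leq_eqVlt => /orP[/eqP ->//|hi].
exact: hX hc i hi.
Qed.

Lemma extend J A Bf : indep_mod J A -> indep_mod J Bf ->
  forall k, (size A + k <= size Bf)%N ->
  exists C, size C = k /\ (forall g, g \in C -> g \in Bf) /\ indep_mod J (A ++ C).
Proof.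
move=> hA hB; elim => [|k ih] hk.
  by exists [::]; rewrite cats0.
have [C [hs [hsub hi]]] : exists C, size C = k /\ (forall g, g \in C -> g \in Bf) /\ indep_mod J (A ++ C).
  by apply: ih; rewrite addnS in hk; exact: ltnW.
have : exists b, b \in Bf /\ indep_mod J (rcons (A ++ C) b).
  apply: NNPP => hno.
  have [f hf] := choose_fun (fun _ => 0 : K) (fun i beta =>
    mem_ideal J (Bf`_i - \sum_(t < size (A ++ C)) beta t *: (A ++ C)`_t)).
  apply: (LA (u := fun t : 'I_(size (A ++ C)) => (A ++ C)`_t) (beta := fun i t => f i t)) hB.
    move=> i hi'; have := hf i; apply.
    apply: dependence => // hind; apply: hno; exists Bf`_i; split=> //; exact: mem_nth.
  by rewrite size_cat hs -addnS.
move=> [b [hb hi']]; exists (rcons C b); split; first by rewrite size_rcons hs.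
split; first by move=> g; rewrite mem_rcons inE => /orP[/eqP ->|/hsub].
by rewrite -rcons_cat.
Qed.

Lemma lincomb_cat (c : seq K) A C :
  lincomb c (A ++ C) = lincomb c A + lincomb (drop (size A) c) C.
Proof.
rewrite /lincomb size_cat big_split_ord /=; congr (_ + _).
  by apply: eq_bigr => i _; rewrite nth_cat ltn_ord.
apply: eq_bigr => i _; rewrite nth_cat ltnNge leq_addr /= addKn nth_drop //.
Qed.

Lemma indep_cat_split J A C : indep_mod J (A ++ C) ->
  forall (al ga : seq K), mem_ideal J (lincomb al A + lincomb ga C) ->
  forall j, (j < size C)%N -> ga`_j = 0.
Proof.
move=> hi al ga h j hj.
pose c := mkseq (fun i => al`_i) (size A) ++ ga.
have hc : lincomb c (A ++ C) = lincomb al A + lincomb ga C.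
  rewrite lincomb_cat /c drop_size_cat ?size_mkseq //; congr (_ + _).
  by apply: eq_bigr => i _; rewrite nth_cat size_mkseq ltn_ord nth_mkseq.
rewrite -hc in h; have := hi c h (size A + j)%N.
by rewrite size_cat ltn_add2l hj /c nth_cat size_mkseq ltnNge leq_addr /= addKn => ->.
Qed.

Lemma indep_cat_intro J A C :
  (forall (al ga : seq K), mem_ideal J (lincomb al A + lincomb ga C) ->
     (forall i, (i < size A)%N -> al`_i = 0) /\ (forall j, (j < size C)%N -> ga`_j = 0)) ->
  indep_mod J (A ++ C).
Proof.
move=> h c hc i; change (mem_ideal J (lincomb c (A ++ C))) in hc; rewrite lincomb_cat in hc; have [h1 h2] := h _ _ hc.
rewrite size_cat => hi; case: (ltnP i (size A)) => hiA; first exact: h1.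
have := h2 (i - size A)%N; rewrite nth_drop subnKC // => -> //.
by rewrite ltn_subLR.
Qed.

End LinAlg2.

Section Key.
Variables (K : fieldType) (m : nat).
Implicit Types (gs hs A B J : seq {mpoly K[m]}) (p q g a b : {mpoly K[m]}).

Lemma homog0_const p : p \is 0.-homog -> p = (p@_0)%:MP.
Proof.
move=> hp; apply/mpolyP => mo; rewrite mcoeffC.
case: (eqVneq mo 0%MM) => [->|ne]; first by rewrite mulr1.
rewrite mulr0; apply: (dhomog_nemf_coeff hp).
by rewrite mdeg_eq0.
Qed.

Lemma eqI_sub gs hs : (forall g, g \in gs -> mem_ideal hs g) ->
  (forall g, g \in hs -> mem_ideal gs g) -> eqI gs hs.
Proof. by move=> h1 h2 p; split; apply: ideal_sub. Qed.

Lemma homog_ne0_hpos d p : (0 < d)%N -> p \is d.-homog -> hpos p.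
Proof. by move=> d0 hp; exists d. Qed.

Lemma key_seq (qs : seq {mpoly K[m]}) z w :
  (forall q, q \in qs -> q \is 2.-homog) -> regular_seq qs ->
  z \is 1.-homog -> w \is 1.-homog -> z != 0 -> w != 0 ->
  mem_ideal qs (z * w) ->
  exists P : seq {mpoly K[m]}, size P = (size qs).-1 /\
    (forall g, g \in P -> g \is 2.-homog) /\ eqI qs (rcons P (z * w)) /\
    regA [::] (z :: P) /\ nzd P w.
Proof.
move=> hq /regular_regA [_ hreg] hz hw z0 w0 hzw.
set zw := z * w.
have hzw2 : zw \is 2.-homog by apply: (dhomogM hz hw).
have zw0 : zw != 0 by rewrite mulf_neq0.
have HGq : HG qs by move=> q /hq; apply: homog_ne0_hpos.
have [lam hlam] : exists lam : nat -> K, zw = \sum_(i < size qs) lam i *: qs`_i.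
  move/mem_idealP: hzw => [f hf].
  exists (fun i => (pih 0 (f i))@_0).
  have := congr1 (fun p => pih 2 p) hf; rewrite (pih_homog _ hzw2) eqxx => ->.
  rewrite linear_sum /=; apply: eq_bigr => i _.
  rewrite (pihM _ _ (hq _ (mem_nth 0 (ltn_ord i)))) /= -mul_mpolyC.
  by rewrite -(homog0_const (pihomogP _ _ _)).
have hex : exists i, (i < size qs)%N && (lam i != 0).
  apply: NNPP => hno; move/eqP: zw0; apply; rewrite hlam big1 // => i _.
  case: (eqVneq (lam i) 0) => [->|ne]; first by rewrite scale0r.
  by exfalso; apply: hno; exists i; rewrite ltn_ord ne.
have hbd : forall i, (i < size qs)%N && (lam i != 0) -> (i <= size qs)%N.
  by move=> i /andP[/ltnW].
case: (ex_maxnP hex hbd) => k /andP[hk lk0] kmax.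
set A := take k qs; set q := qs`_k; set B := drop k.+1 qs.
have eqs : qs = A ++ q :: B by rewrite /A /q /B -drop_nth // cat_take_drop.
have sA : size A = k by rewrite size_take hk.
have hdiff : mem_ideal A (zw - lam k *: q).
  have -> : zw - lam k *: q = \sum_(i < size A) lam i *: A`_i.
    rewrite hlam eqs size_cat /= big_split_ord /= big_ord_recl /=.
    rewrite [X in _ + (_ + X)]big1; last first.
      move=> i _; rewrite nth_cat ltnNge leq_addr /= addKn /=.
      suff -> : lam (size A + bump 0 i)%N = 0 by rewrite scale0r.
      apply/eqP; apply: contraT => hne.
      have := kmax (size A + bump 0 i)%N; rewrite hne andbT.
      have hlt : (size A + bump 0 i < size qs)%N.
        rewrite eqs size_cat /= /bump /=; have := ltn_ord i; lia.
      by rewrite hlt sA /bump /= add1n addnS => /(_ isT); rewrite ltnNge leq_addr.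
    rewrite addn0 nth_cat ltnn subnn /= sA addr0 addrK.
    apply: eq_bigr => i _; have hi : (i < size A)%N by rewrite sA. by rewrite (nth_cat 0 A (q :: B)) hi.
  by apply: mem_ideal_sum => i _; apply: mem_idealZ; apply: mem_ideal_gen; apply: mem_nth.
have inA : forall g, g \in A -> g \in qs by move=> g; apply: mem_take.
have inB : forall g, g \in B -> g \in qs by move=> g; apply: mem_drop.
have inq : q \in qs by apply: mem_nth.
have HGA : HG A by move=> g /inA /HGq.
have HGB : HG B by move=> g /inB /HGq.
have hzwp : hpos zw by apply: homog_ne0_hpos hzw2.
have hzp : hpos z by apply: homog_ne0_hpos hz.
move: hreg; rewrite eqs => /regA_cat [regAA] /= [nzq regB].
have qzw : mem_ideal (rcons A zw) q.
  have -> : q = (lam k)^-1 *: (zw - (zw - lam k *: q)).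
    by rewrite opprB addrC subrK scalerA mulVf // scale1r.
  apply: mem_idealZ; apply: mem_idealB; first by apply: mem_ideal_gen; rewrite mem_rcons mem_head.
  exact: mem_ideal_sub_rcons.
have nzzw : nzd A zw.
  move=> g hg; have : mem_ideal A ((lam k *: g) * q).
    have -> : (lam k *: g) * q = g * zw - g * (zw - lam k *: q).
      by rewrite mulrBr opprB addrC subrK -scalerAl -scalerAr.
    by apply: mem_idealB => //; apply: mem_idealMl.
  move/nzq => h; have -> : g = (lam k)^-1 *: (lam k *: g) by rewrite scalerA mulVf // scale1r.
  exact: mem_idealZ.
have eqAq : eqI (rcons A q) (rcons A zw).
  apply: eqI_sub => g; rewrite mem_rcons inE => /orP[/eqP ->|gA].
  - exact: qzw.
  - by apply: mem_ideal_gen; rewrite mem_rcons inE gA orbT.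
  - have -> : zw = (zw - lam k *: q) + lam k *: q by rewrite subrK.
    apply: mem_idealD; first exact: mem_ideal_sub_rcons.
    by apply: mem_idealZ; apply: mem_ideal_gen; rewrite mem_rcons mem_head.
  - by apply: mem_ideal_gen; rewrite mem_rcons inE gA orbT.
have reg2 : regA A (zw :: B) by split=> //; apply: regA_eqI regB.
have reg3 := regA_to_end HGA hzwp HGB reg2.
set P := A ++ B.
have regP : regA [::] (P ++ [:: zw]) by rewrite /P -catA; apply/regA_cat.
move/regA_cat: regP => [regP0 /= [nzP _]].
have nzw : nzd P w.
  move=> g hg; apply: nzP; rewrite /zw mulrA [g * z]mulrC -mulrA; exact: mem_idealMl.
have nzz : nzd P z.
  move=> g hg; apply: nzP; rewrite /zw mulrA; exact: mem_idealMr.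
have HGP : HG P by apply/HG_cat.
exists P; split.
  by rewrite /P !size_cat /= addnS.
split; first by move=> g; rewrite mem_cat => /orP[/inA|/inB]; apply: hq.
split.
  apply: eqI_sub => g.
    rewrite mem_cat inE => /orP[gA|/orP[/eqP ->|gB]].
    - by apply: mem_ideal_gen; rewrite mem_rcons inE /P mem_cat gA orbT.
    - apply: ideal_sub qzw => x; rewrite mem_rcons inE => /orP[/eqP ->|xA]; apply: mem_ideal_gen.
        by rewrite mem_rcons mem_head.
      by rewrite mem_rcons inE /P mem_cat xA !orbT.
    - by apply: mem_ideal_gen; rewrite mem_rcons inE /P mem_cat gB !orbT.
  rewrite mem_rcons inE mem_cat => /orP[/eqP ->|/orP[gA|gB]].
  - by move: hzw; rewrite eqs.
  - by apply: mem_ideal_gen; rewrite mem_cat gA.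
  - by apply: mem_ideal_gen; rewrite mem_cat inE gB !orbT.
split=> //.
apply: regA_to_front => //; apply/regA_cat; split=> //=.
Qed.

End Key.

Section Lin.
Variables (K : fieldType) (m : nat).

Lemma lin_form (p : {mpoly K[m]}) : p \is 1.-homog -> p = \sum_(i < m) p@_U_(i) *: 'X_i.
Proof.
move=> hp; apply/mpolyP => mo; rewrite raddf_sum /=.
case: (mdeg1P mo) => [[j /eqP ->]|ne].
  rewrite (bigD1 j) //= mcoeffZ mcoeffXU eqxx mulr1 big1 ?addr0 //.
  by move=> i /negbTE hij; rewrite mcoeffZ mcoeffXU hij mulr0.
rewrite big1; last first.
  move=> i _; rewrite mcoeffZ mcoeffX.
  case: eqP => [e|_]; last by rewrite mulr0.
  by exfalso; apply: ne; exists i; rewrite e.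
apply: (dhomog_nemf_coeff hp); apply/eqP => e; apply: ne; apply/mdeg1P; exact/eqP.
Qed.

End Lin.

Section Elim.
Variables (K : fieldType) (n : nat) (z : {mpoly K[n.+1]}) (j : 'I_n.+1).
Hypothesis hz : z \is 1.-homog.
Hypothesis hzj : z@_U_(j) != 0.

Let a i := z@_U_(i).
Definition xi (i : 'I_n.+1) : {mpoly K[n]} := if unlift j i is Some i' then 'X_i' else 0.
Definition Lj : {mpoly K[n]} := - (a j)^-1 *: \sum_(i < n.+1) a i *: xi i.
Definition Lt : n.+1.-tuple {mpoly K[n]} := [tuple (if i == j then Lj else xi i) | i < n.+1].
Definition Mt : n.-tuple {mpoly K[n.+1]} := [tuple 'X_(lift j i) | i < n].

Lemma xi_j : xi j = 0.
Proof. by rewrite /xi unlift_none. Qed.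

Lemma compXU_L i : 'X_i \mPo Lt = tnth Lt i.
Proof. by rewrite comp_mpolyXU -tnth_nth. Qed.

Lemma z_L : z \mPo Lt = 0.
Proof.
rewrite {1}(lin_form hz) raddf_sum /=.
rewrite (eq_bigr (fun i => a i *: tnth Lt i)); last by move=> i _; rewrite linearZ /= compXU_L.
rewrite (bigD1 j) //= tnth_mktuple eqxx /Lj scalerA mulrN mulfV // scaleN1r.
rewrite (bigD1 j) //= xi_j scaler0 add0r.
rewrite [X in _ + X](eq_bigr (fun i => a i *: xi i)); first by rewrite addNr.
by move=> i /negbTE hij; rewrite tnth_mktuple hij.
Qed.

Lemma ML h : (h \mPo Mt) \mPo Lt = h.
Proof.
rewrite comp_assoc -[RHS]comp_mpoly_id; congr comp_mpoly.
apply: eq_mktuple => i; rewrite tnth_mktuple compXU_L tnth_mktuple.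
by rewrite eq_sym (negbTE (neq_lift j i)) /xi liftK.
Qed.

Lemma xiM i : xi i \mPo Mt = if i == j then 0 else 'X_i.
Proof.
rewrite /xi; case: unliftP => [i' ->|->]; last by rewrite eqxx comp_mpoly0.
by rewrite eq_sym (negbTE (neq_lift j i')) comp_mpolyXU -tnth_nth tnth_mktuple.
Qed.

Lemma LM g : mem_ideal [:: z] (((g \mPo Lt) \mPo Mt) - g).
Proof.
rewrite comp_assoc -{2}[g]comp_mpoly_id; apply: cong_comp => i.
rewrite !tnth_mktuple; case: (eqVneq i j) => [->|ne].
  rewrite [Lj]/Lj comp_mpolyZ comp_sum.
  rewrite (eq_bigr (fun i => a i *: (if i == j then 0 else 'X_i))); last first.
    by move=> i0 _; rewrite comp_mpolyZ xiM.
  have -> : \sum_(i < n.+1) a i *: (if i == j then 0 else 'X_i) = z - a j *: 'X_j.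
    rewrite [X in _ = X - _](lin_form hz) (bigD1 j) //= eqxx scaler0 add0r.
    rewrite [X in _ = X - _](bigD1 j) //= addrAC subrr add0r.
    by apply: eq_bigr => i0 /negbTE ->.
  have -> : - (a j)^-1 *: (z - a j *: 'X_j) - 'X_j = - (a j)^-1 *: z.
    by rewrite scalerBr scalerA mulNr mulVf // scaleN1r opprK addrK.
  by apply: mem_idealZ; apply: mem_ideal_gen; rewrite mem_head.
by rewrite xiM (negbTE ne) subrr; apply: mem_ideal0.
Qed.

Lemma Lt_homog i : tnth Lt i \is 1.-homog.
Proof.
have hxi : forall i, xi i \is 1.-homog.
  move=> i0; rewrite /xi; case: unlift => [i'|]; last exact: dhomog0.
  by rewrite dhomogX /= mdeg1.
rewrite tnth_mktuple; case: ifP => _ //; rewrite /Lj.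
by apply: rpredZ; apply: rpred_sum => i0 _; apply: rpredZ.
Qed.

Lemma zI_sub (I : seq {mpoly K[n.+1]}) p : mem_ideal [:: z] p -> mem_ideal (z :: I) p.
Proof. by apply: ideal_sub => x; rewrite inE => /eqP ->; apply: mem_ideal_gen; rewrite mem_head. Qed.

Lemma mapLM (I : seq {mpoly K[n.+1]}) p :
  mem_ideal (map (comp_mpoly Mt) (map (comp_mpoly Lt) I)) p -> mem_ideal (z :: I) p.
Proof.
apply: ideal_sub => x /mapP [y /mapP [x0 hx0 ->] ->].
have -> : (x0 \mPo Lt) \mPo Mt = x0 + (((x0 \mPo Lt) \mPo Mt) - x0) by rewrite addrC subrK.
apply: mem_idealD; first by apply: mem_ideal_gen; rewrite inE hx0 orbT.
exact/zI_sub/LM.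
Qed.

Lemma drop0_ideal k (I : seq {mpoly K[k]}) p : mem_ideal (0 :: I) p -> mem_ideal I p.
Proof. apply: ideal_sub => x; rewrite inE => /orP[/eqP ->|h]; [exact: mem_ideal0 | exact: mem_ideal_gen]. Qed.

Lemma nzd_transfer (I : seq {mpoly K[n.+1]}) b :
  nzd (z :: I) b -> nzd (map (comp_mpoly Lt) I) (b \mPo Lt).
Proof.
move=> hb g hg.
have h1 := mapLM (mem_ideal_comp Mt hg).
rewrite rmorphM /= in h1.
have h2 : mem_ideal (z :: I) ((g \mPo Mt) * b).
  have -> : (g \mPo Mt) * b = (g \mPo Mt) * ((b \mPo Lt) \mPo Mt)
      - (g \mPo Mt) * (((b \mPo Lt) \mPo Mt) - b) by rewrite -mulrBr opprB addrC subrK.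
  by apply: mem_idealB => //; apply: mem_idealMl; apply/zI_sub/LM.
have /(mem_ideal_comp Lt) := hb _ h2.
by rewrite ML /= z_L; apply: drop0_ideal.
Qed.

Lemma regA_transfer (I s : seq {mpoly K[n.+1]}) :
  regA (z :: I) s -> regA (map (comp_mpoly Lt) I) (map (comp_mpoly Lt) s).
Proof.
elim: s I => //= b s ih I [h1 h2]; split; first exact: nzd_transfer.
by rewrite -map_rcons; apply: ih.
Qed.

End Elim.

Section Span.
Variables (K : fieldType) (m : nat).

Lemma homog_span (e : nat) :
  exists N, exists u : 'I_N -> {mpoly K[m]}, forall g : {mpoly K[m]}, g \is e.-homog ->
    exists beta : 'I_N -> K, g = \sum_(t < N) beta t *: u t.
Proof.
pose T : finType := 'X_{1..m < e.+1}.
exists #|T|, (fun t => 'X_[val (enum_val t)]) => g hg.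
exists (fun t => g@_(val (enum_val t))).
have hs : (msize g <= e.+1)%N.
  rewrite msizeE; apply/bigmax_leqP_seq => mo hmo _.
  by rewrite ltnS (dhomog_mf hg hmo).
rewrite {1}(mpolywE hs).
rewrite (reindex (fun t : 'I_#|T| => enum_val t)) //=.
by apply: onW_bij; apply: enum_val_bij.
Qed.

End Span.

Section Dims.
Variables (K : fieldType) (m : nat).
Implicit Types (gs A C G H J : seq {mpoly K[m]}).

Lemma lincomb_homog (c : seq K) gs e : (forall g, g \in gs -> g \is e.-homog) ->
  lincomb c gs \is e.-homog.
Proof. by move=> h; apply: rpred_sum => i _; apply: rpredZ; apply: h; apply: mem_nth. Qed.

Lemma lincomb_mem J (c : seq K) gs : (forall g, g \in gs -> mem_ideal J g) ->
  mem_ideal J (lincomb c gs).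
Proof. by move=> h; apply: mem_ideal_sum => i _; apply: mem_idealZ; apply: h; apply: mem_nth. Qed.

Lemma dims_clause (qs : seq {mpoly K[m]}) z w :
  HGe qs -> z \is 1.-homog -> mem_ideal qs (z * w) ->
  (forall g, mem_ideal qs (g * w) <-> mem_ideal (z :: qs) g) ->
  forall s, (1 <= s)%N -> exists d1 d2 d3, dimK qs s w d1 /\ dimR qs s.-1 d2 /\
     dimK qs s.-1 z d3 /\ d1 = (d2 - d3)%N.
Proof.
move=> HGq hz hzw cl1 s s1.
have [N [u hu]] := homog_span K m s.-1.
have [d2 hd2] := dim_exists qs hu.
have [d3 hd3] : exists d3, dimK qs s.-1 z d3.
  by apply: (dim_exists qs (u := u)) => g [hg _]; apply: hu.
exists (d2 - d3)%N, d2, d3; split=> //.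
move: hd2 hd3 => [[Bf [sB [PB iB]]] bd2] [[A [sA [PA iA]]] bd3].
have d32 : (d3 <= d2)%N by rewrite -sA; apply: bd2 => // g /PA [].
have hs1 : (1 + s.-1)%N = s by rewrite add1n prednK.
split.
  have [C [sC [CB iAC]]] : exists C, size C = (d2 - d3)%N /\ (forall g, g \in C -> g \in Bf)
      /\ indep_mod qs (A ++ C).
    by apply: extend => //; rewrite sA sB subnKC.
  exists (map (fun c => z * c) C); split; first by rewrite size_map.
  split.
    move=> g /mapP [c hc ->]; split.
      by rewrite -hs1; apply: dhomogM => //; apply: PB; apply: CB.
    by rewrite mulrAC; apply: mem_idealMr.
  move=> ga hga i hi; rewrite size_map in hi.
  have hy : mem_ideal qs (lincomb ga C * z).
    move: hga; congr mem_ideal; rewrite /lincomb size_map mulr_suml.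
    by apply: eq_bigr => k _; rewrite (nth_map 0) // -scalerAl mulrC.
  have yhom : lincomb ga C \is s.-1.-homog.
    by apply: lincomb_homog => g /CB /PB.
  have : ~ indep_mod qs (rcons A (lincomb ga C)).
    move=> hind; have := bd3 _ _ hind; rewrite size_rcons sA ltnn => h; suff : false by []; apply: h.
    by move=> g; rewrite mem_rcons inE => /orP[/eqP ->|/PA].
  move/(dependence iA) => [beta hb].
  pose al := [seq - beta t | t <- enum 'I_(size A)].
  apply: (indep_cat_split iAC (al := al)) hi.
  move: hb; congr mem_ideal; rewrite addrC; congr (_ + _).
  rewrite /lincomb -sumrN; apply: eq_bigr => t _.
  by rewrite (nth_map t) ?size_enum_ord // nth_ord_enum scaleNr.
move=> G PG iG.
have [f hf] := choose_fun (0 : {mpoly K[m]}) (fun i h =>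
   h \is s.-1.-homog /\ mem_ideal qs (G`_i - h * z)).
set H := mkseq f (size G).
have hH : forall i, (i < size G)%N -> H`_i \is s.-1.-homog /\ mem_ideal qs (G`_i - H`_i * z).
  move=> i hi; rewrite nth_mkseq //; apply: hf.
  have [hGi hGw] := PG _ (mem_nth 0 hi).
  move/cl1/mem_ideal_cons: hGw => [t ht].
  exists (pih s.-1 t); split; first exact: pihomogP.
  have := mem_ideal_pih s HGq ht; rewrite linearB /= (pih_homog _ hGi) eqxx.
  by rewrite (pihM _ _ hz) s1 subn1.
have sH : size H = size G by rewrite size_mkseq.
have iAH : indep_mod qs (A ++ H).
  apply: indep_cat_intro => al ga hag.
  have hGz : mem_ideal qs (lincomb ga G).
    have -> : lincomb ga G = (lincomb al A + lincomb ga H) * z - lincomb al A * z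
        + \sum_(i < size G) ga`_i *: (G`_i - H`_i * z).
      rewrite mulrDl [_ + lincomb ga H * z]addrC addrK /lincomb sH mulr_suml -big_split /=.
      by apply: eq_bigr => i _; rewrite -scalerAl scalerBr addrC subrK.
    apply: mem_idealD; last by apply: mem_ideal_sum => i _; apply: mem_idealZ; apply: (hH _ (ltn_ord i)).2.
    apply: mem_idealB; first exact: mem_idealMr.
    rewrite /lincomb mulr_suml; apply: mem_ideal_sum => i _; rewrite -scalerAl.
    by apply: mem_idealZ; apply: (PA _ (mem_nth 0 (ltn_ord i))).2.
  have ga0 : forall j, (j < size H)%N -> ga`_j = 0 by rewrite sH; apply: iG.
  split=> //.
  apply: iA; change (mem_ideal qs (lincomb al A)); have -> : lincomb al A = lincomb al A + lincomb ga H.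
    by rewrite [X in _ = _ + X]big1 ?addr0 // => i _; rewrite ga0 // scale0r.
  exact: hag.
have : (d3 + size G <= d2)%N.
  rewrite -sA -sH -size_cat; apply: bd2 iAH => g.
  rewrite mem_cat => /orP[/PA []|/(nthP 0) [i hi <-]] //; apply: (hH i _).1; by rewrite -sH.
by move=> h; rewrite leq_subRL.
Qed.

End Dims.

Unset Implicit Arguments.
Set Strict Implicit.
Theorem mainTheorem13 (K : closedFieldType) (hK : [pchar K] =i pred0)
  (n : nat) (qs : seq {mpoly K[n.+1]}) (hR : CI_quadric_SAGA qs)
  (w z : {mpoly K[n.+1]})
  (hw1 : w \is 1.-homog) (hz1 : z \is 1.-homog)
  (hw0 : ~ mem_ideal qs w) (hz0 : ~ mem_ideal qs z)
  (hzw : mem_ideal qs (z * w)) :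
  (* (z) = (0 : w) as ideals of R = S/(qs) *)
  (forall g : {mpoly K[n.+1]}, mem_ideal qs (g * w) <-> mem_ideal (z :: qs) g)
  /\
  (* R/(z) is isomorphic, as a graded K-algebra, to a complete intersection
     SAGA of codimension n presented by quadrics *)
  (exists (qs' : seq {mpoly K[n]}) (L : n.+1.-tuple {mpoly K[n]}),
      CI_quadric_SAGA qs'
      /\ (forall i, tnth L i \is 1.-homog)
      /\ (forall g : {mpoly K[n.+1]}, mem_ideal qs' (g \mPo L) <-> mem_ideal (z :: qs) g)
      /\ (forall h : {mpoly K[n]}, exists g : {mpoly K[n.+1]}, mem_ideal qs' (h - (g \mPo L))))
  /\
  (* dim K^s_w = dim R^(s-1) - dim K^(s-1)_z for all s >= 1 *)
  (forall s : nat, (1 <= s)%N ->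
     exists d1 d2 d3 : nat,
       dimK qs s w d1 /\ dimR qs s.-1 d2 /\ dimK qs s.-1 z d3 /\ d1 = (d2 - d3)%N).
Proof.
move: hR => [hsize [h2 hreg]].
have z0 : z != 0 by apply/eqP => e; apply: hz0; rewrite e; apply: mem_ideal0.
have w0 : w != 0 by apply/eqP => e; apply: hw0; rewrite e; apply: mem_ideal0.
have [P [sP [hP2 [eqP' [regzP nzw]]]]] := key_seq h2 hreg hz1 hw1 z0 w0 hzw.
have Pqs : forall p, mem_ideal P p -> mem_ideal qs p.
  move=> p; apply: ideal_sub => g gP; apply/eqP'; apply: mem_ideal_gen.
  by rewrite mem_rcons inE gP orbT.
have HGq : HGe qs by move=> q /h2 hq; exists 2%N.
have clause1 : forall g : {mpoly K[n.+1]}, mem_ideal qs (g * w) <-> mem_ideal (z :: qs) g.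
  move=> g; split.
    move/eqP'/mem_ideal_rcons => [t ht].
    have : mem_ideal P ((g - t * z) * w) by rewrite mulrBl -mulrA.
    move/nzw => h; apply/mem_ideal_cons; exists t; exact: Pqs.
  move/mem_ideal_cons => [t ht].
  have -> : g * w = (g - t * z) * w + t * (z * w) by rewrite mulrBl mulrA subrK.
  by apply: mem_idealD; [apply: mem_idealMr | apply: mem_idealMl].
split=> //.
split.
  have [j hj] : exists j, z@_U_(j) != 0.
    apply: NNPP => hno; move/eqP: z0; apply; rewrite (lin_form hz1) big1 // => i _.
    case: (eqVneq (z@_U_(i)) 0) => [->|ne]; first by rewrite scale0r.
    by exfalso; apply: hno; exists i.
  set L := Lt z j; set M := Mt K j.
  exists (map (comp_mpoly L) P), L.
  have hqs' : forall g, g \in map (comp_mpoly L) P -> g \is 2.-homog.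
    move=> g /mapP [p hp ->]; apply: homog_comp; first exact: Lt_homog.
    exact: hP2.
  split.
    split; first by rewrite size_map sP hsize.
    split=> //.
    apply/regular_regA; split.
      apply: no_unit => g /hqs' hg; by exists 2%N.
    move: regzP => /= [_ hr].
    exact: (regA_transfer hz1 hj (I := [::]) hr).
  split; first exact: Lt_homog.
  split.
    move=> g; split.
      move/(mem_ideal_comp M)/mapLM => /(_ hz1 hj) h.
      have {}h : mem_ideal (z :: qs) ((g \mPo L) \mPo M).
        move: h; apply: ideal_sub => x; rewrite inE => /orP[/eqP ->|xP].
          by apply: mem_ideal_gen; rewrite mem_head.
        by apply: mem_ideal_sub_cons; apply: Pqs; apply: mem_ideal_gen.
      have -> : g = (g \mPo L) \mPo M - (((g \mPo L) \mPo M) - g) by rewrite opprB addrC subrK.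
      by apply: mem_idealB => //; apply/zI_sub/LM.
    move/(mem_ideal_comp L); apply: ideal_sub => x /mapP [y]; rewrite inE => /orP[/eqP ->|yq] ->.
      by rewrite z_L //; apply: mem_ideal0.
    have /eqP'/(mem_ideal_comp L) : mem_ideal qs y by apply: mem_ideal_gen.
    apply: ideal_sub => x'; rewrite map_rcons mem_rcons inE => /orP[/eqP ->|xm].
      by rewrite rmorphM /= z_L // mul0r; apply: mem_ideal0.
    exact: mem_ideal_gen.
  move=> h; exists (h \mPo M); rewrite ML subrr; exact: mem_ideal0.
exact: (dims_clause HGq hz1 hzw clause1).
Qed.
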